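(* Let $p\ge 5$ be a prime and $k$ an integer with $1\le k\le \frac{p-3}{2}$, and put $t=p-1-2k$. Then, modulo $p$, \begin{align*} (-1)^k 4^{2k-1} E_t \equiv{}& 32^t S_t(0, \tfrac{1}{128}) + 6^t S_t(\tfrac{1}{8}, \tfrac{7}{48}) + 6^t S_t(\tfrac{3}{16}, \tfrac{5}{24}) + (2^t + 4^t) S_t(\tfrac{7}{16}, \tfrac{11}{24})\\ &+ (2^t + 4^t + 6^t) S_t(\tfrac{11}{24}, \tfrac{15}{32}) + (2^t + 4^t + 6^t + 8^t) S_t(\tfrac{15}{32}, \tfrac{23}{48}) + (2^t + 4^t + 8^t) S_t(\tfrac{23}{48}, \tfrac{31}{64})\\ &+ (2^t + 4^t + 8^t + 16^t) S_t(\tfrac{31}{64}, \tfrac{63}{128}) + (2^t + 4^t + 8^t + 16^t + 32^t) S_t(\tfrac{63}{128}, \tfrac{1}{2}). \end{align*}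
   Context: $E_n$ denotes the $n$th Euler number, defined by $\sec z=\sum_{n\ge0}E_n\frac{z^n}{n!}$ (so $E_2=1$, $E_4=5$). For a prime $p$, an integer $\ell$ and real numbers $0\le x<y\le 1$, $S_\ell(x,y)=\sum_{xp<s<yp} s^\ell$, the sum over integers $s$ strictly between $xp$ and $yp$. Congruences between rational numbers modulo $p$ mean that the difference has $p$-adic valuation at least $1$. *)

(* Defs.v *)
From HB Require Import structures.
From mathcomp Require Import all_boot all_order all_algebra.
Set Implicit Arguments. Unset Strict Implicit. Unset Printing Implicit Defensive.
Import Order.TTheory GRing.Theory Num.Theory.
Local Open Scope ring_scope.

(* Euler numbers E_n with sec z = sum_n E_n z^n / n!.
   As formal power series, sec * cos = 1, i.e. E_0 = 1, E_n = 0 for n odd, and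
   for even n >= 2:  sum_{j even, j <= n} C(n,j) (-1)^((n-j)/2) E_j = 0.
   eseq n = [:: E_0; ...; E_n]. *)
Definition euler_next (n : nat) (s : seq int) : int :=
  if odd n then 0
  else - \sum_(0 <= j < n | ~~ odd j)
           ('C(n, j))%:Z * (-1) ^+ ((n - j)./2) * nth 0 s j.

Fixpoint eseq (n : nat) : seq int :=
  match n with
  | 0 => [:: 1]
  | m.+1 => rcons (eseq m) (euler_next m.+1 (eseq m))
  end.

Definition euler (n : nat) : int := nth 0 (eseq n) n.

(* S_l(x,y) = sum of s^l over integers s with x p < s < y p (for 0 <= x < y <= 1,
   all such s lie in [0, p]). *)
Definition Ssum (p l : nat) (x y : rat) : int :=
  \sum_(0 <= s < p.+1 | (x * p%:R < s%:R) && (s%:R < y * p%:R)) (s%:Z) ^+ l.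

(* Main.v *)
Require Import Defs.
From mathcomp Require Import all_boot all_order all_algebra.
From mathcomp Require Import zify ring lra.
From mathcomp Require Import finfield.
Import GRing.Theory Num.Theory.
Local Open Scope ring_scope.

Lemma exprN_even (R : pzRingType) (x : R) n : ~~ odd n -> (- x) ^+ n = x ^+ n.
Proof. by move=> h; rewrite exprNn -signr_odd (negbTE h) expr0 mul1r. Qed.

Lemma eseq_size m : size (eseq m) = m.+1.
Proof. by elim: m => [//|m IH] /=; rewrite size_rcons IH. Qed.

Lemma eseq_nth m j : (j <= m)%N -> nth 0 (eseq m) j = euler j.
Proof.
elim: m j => [|m IH] j hj; first by case: j hj.
rewrite leq_eqVlt in hj; case/orP: hj => [/eqP -> //|hj].
by rewrite /= nth_rcons eseq_size hj IH.
Qed.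

Lemma euler_rec n : ~~ odd n -> (0 < n)%N ->
  euler n = - \sum_(0 <= j < n | ~~ odd j)
           ('C(n, j))%:Z * (-1) ^+ ((n - j)./2) * euler j.
Proof.
case: n => [//|m] hodd _.
rewrite /euler /= nth_rcons eseq_size ltnn eqxx /euler_next (negbTE hodd).
congr (- _); rewrite [LHS]big_nat_cond [RHS]big_nat_cond.
by apply: eq_bigr => j /andP[/andP[_ hj] _]; rewrite eseq_nth.
Qed.

Lemma reindex_nat (R : nmodType) (m n m' n' : nat) (P Q : pred nat) (h g : nat -> nat) (G : nat -> R) :
  (forall s, (m <= s < n)%N -> P s -> (m' <= h s < n')%N /\ Q (h s) /\ g (h s) = s) ->
  (forall u, (m' <= u < n')%N -> Q u -> (m <= g u < n)%N /\ P (g u) /\ h (g u) = u) ->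
  \sum_(m <= s < n | P s) G (h s) = \sum_(m' <= u < n' | Q u) G u.
Proof.
move=> H1 H2; rewrite -big_filter -[RHS]big_filter -(big_map h xpredT G).
apply: perm_big; apply: uniq_perm.
- rewrite map_inj_in_uniq ?filter_uniq ?iota_uniq //.
  move=> x y; rewrite !mem_filter !mem_index_iota => /andP[Px xn] /andP[Py yn] hxy.
  have [_ [_ <-]] := H1 x xn Px; have [_ [_ <-]] := H1 y yn Py; by rewrite hxy.
- by rewrite filter_uniq ?iota_uniq.
move=> u; apply/mapP/idP.
- case=> s; rewrite mem_filter mem_index_iota => /andP[Ps sn] ->.
  have [hn [Qh _]] := H1 s sn Ps; by rewrite mem_filter mem_index_iota Qh hn.
- rewrite mem_filter mem_index_iota => /andP[Qu un].
  have [gn [Pg hg]] := H2 u un Qu; exists (g u) => //.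
  by rewrite mem_filter mem_index_iota Pg gn.
Qed.

Lemma sign_eq (R : pzRingType) a b : ~~ odd (a + b) -> ((-1) ^+ a : R) = (-1) ^+ b.
Proof.
move=> h; rewrite -signr_odd -[in RHS]signr_odd; congr (_ ^+ _).
by move: h; rewrite oddD; case: (odd a); case: (odd b).
Qed.

Section Fp.
Variable p : nat.
Hypothesis pP : prime p.
Hypothesis p5 : (5 <= p)%N.
Local Notation F := 'F_p.

Lemma p0 : (p%:R : F) = 0.
Proof. exact: pchar_Fp_0. Qed.

Lemma podd : odd p.
Proof. by case: (even_prime pP) => // h; move: p5; rewrite h. Qed.

Lemma natF0 n : ((n%:R : F) == 0) = (p %| n)%N.
Proof.
apply/eqP/idP => [h|h].
  by have := val_Fp_nat pP n; rewrite h /dvdn => <-.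
by case/dvdnP: h => c ->; rewrite natrM p0 mulr0.
Qed.

Lemma natF_inj x y : (x < p)%N -> (y < p)%N -> (x%:R : F) = y%:R -> x = y.
Proof.
move=> hx hy h.
by have := val_Fp_nat pP x; rewrite h val_Fp_nat // !modn_small.
Qed.

Lemma natF_opp a b m : (a + b = m * p)%N -> (a%:R : F) = - b%:R.
Proof. by move=> h; apply/eqP; rewrite -subr_eq0 opprK -natrD h natrM p0 mulr0. Qed.

Lemma natF_shift a b m : (a = b + m * p)%N -> (a%:R : F) = b%:R.
Proof. by move=> ->; rewrite natrD natrM p0 mulr0 addr0. Qed.

Lemma natF_neq0 n : (0 < n < p)%N -> (n%:R : F) != 0.
Proof.
move=> /andP[h1 h2]; rewrite natF0; apply/negP => /(dvdn_leq h1); by rewrite leqNgt h2.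
Qed.

Lemma two_neq0 : (2%:R : F) != 0.
Proof. apply: natF_neq0; apply/andP; split => //; exact: leq_trans p5. Qed.

Lemma double_eq0 (x : F) : 2%:R * x = 0 -> x = 0.
Proof. by move/eqP; rewrite mulf_eq0 (negbTE two_neq0) /= => /eqP. Qed.

Definition EF n : F := (euler n)%:~R.
Definition hF n : F := \sum_(0 <= m < p) (-1) ^+ m * ((2 * m + 1)%N%:R) ^+ n.

Lemma sign_sum n : \sum_(0 <= m < n) ((-1) ^+ m : F) = (odd n)%:R.
Proof.
elim: n => [|n IH]; first by rewrite big_geq.
rewrite big_nat_recr //= IH -signr_odd; case: (odd n) => /=; rewrite ?expr0 ?expr1 ?mulr1n ?mulr0n.
  by rewrite subrr.
by rewrite add0r.
Qed.

Lemma even_binom (a : F) n : ~~ odd n ->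
  2%:R * \sum_(0 <= j < n.+1 | ~~ odd j) 'C(n, j)%:R * a ^+ j = (a + 1) ^+ n + (- a + 1) ^+ n.
Proof.
move=> hn; rewrite !exprD1n -big_split /= big_mkord big_mkcond mulr_sumr.
apply: eq_bigr => i _; rewrite exprNn -signr_odd.
case: (odd i); rewrite /= ?expr1 ?expr0.
  by rewrite mulr0 mulN1r -mulrnDl subrr mul0rn.
by rewrite mul1r -mulrnDl -mulr2n mulrA -natrM mulr_natl mulrnA.
Qed.

Lemma key n : ~~ odd n -> (0 < n)%N ->
  \sum_(0 <= j < n.+1 | ~~ odd j) 'C(n, j)%:R * hF j = 0.
Proof.
move=> hn n0; apply: double_eq0.
rewrite /hF.
under eq_bigr do rewrite mulr_sumr.
rewrite exchange_big_nat /=.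
rewrite mulr_sumr.
under eq_bigr => m _.
  rewrite (eq_bigr (fun j => (-1) ^+ m * ('C(n, j)%:R * ((2 * m + 1)%N%:R) ^+ j))); last first.
    by move=> j _; rewrite mulrCA.
  rewrite -mulr_sumr mulrCA even_binom //.
  over.
pose f (m : nat) : F := - ((-1) ^+ m * ((2 * m)%N%:R) ^+ n).
rewrite (eq_bigr (fun m => f m.+1 - f m)); last first.
  move=> m _; rewrite /f exprS mulN1r mulNr !opprK.
  have -> : ((2 * m + 1)%N%:R + 1 : F) = (2 * m.+1)%N%:R by rewrite natr1; congr _%:R; lia.
  have -> : (- (2 * m + 1)%N%:R + 1 : F) = - (2 * m)%N%:R by rewrite natrD opprD addrNK.
  by rewrite (@exprN_even _ _ _ hn) mulrDr.
rewrite telescope_sumr // /f natrM p0 mulr0 muln0 !expr0n (gtn_eqF n0).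
by rewrite !mulr0 !oppr0 addr0.
Qed.

Lemma intr_natF n : ((n%:Z)%:~R : F) = n%:R.
Proof. exact: (esym (pmulrn 1 n)). Qed.

Lemma E_hF n : ~~ odd n -> EF n = (-1) ^+ (n./2) * hF n.
Proof.
elim/ltn_ind: n => n IH hn.
case: n IH hn => [|n] IH hn.
  rewrite /EF /euler /= /hF expr0 mul1r.
  under eq_bigr do rewrite expr0 mulr1.
  by rewrite sign_sum podd.
rewrite /EF euler_rec //= rmorphN rmorph_sum /=.
have -> : \sum_(0 <= j < n.+1 | ~~ odd j)
    (('C(n.+1, j))%:Z * (-1) ^+ ((n.+1 - j)./2) * euler j)%:~R
  = \sum_(0 <= j < n.+1 | ~~ odd j) (-1) ^+ (n.+1)./2 * ('C(n.+1, j)%:R * hF j) :> F.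
  rewrite big_nat_cond [RHS]big_nat_cond; apply: eq_bigr => j /andP[/andP[_ hj] ej].
  rewrite rmorphM rmorphM /= intr_natF rmorphXn rmorphN1 -/(EF j) IH //.
  have -> : (-1) ^+ uphalf n = (-1) ^+ ((n.+1 - j)./2) * ((-1) ^+ (j./2) : F).
    by rewrite -exprD; congr (_ ^+ _); lia.
  ring.
rewrite -mulr_sumr -mulrN; congr (_ * _).
have := @key n.+1 hn isT.
rewrite big_mkcond big_nat_recr //= -big_mkcond /= hn binn mul1r => /eqP.
by rewrite addr_eq0 => /eqP ->; rewrite opprK.
Qed.

Lemma powsum0 t : (0 < t)%N -> (t < p.-1)%N ->
  \sum_(0 <= x < p) ((x%:R : F) ^+ t) = 0.
Proof.
move=> t0 tp.
have [a /andP[ha1 ha2] hat] : exists2 a, (0 < a < p)%N & ((a%:R : F) ^+ t != 1).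
  pose rs := [seq (x%:R : F) | x <- index_iota 1 p].
  case: (boolP (all (fun x : F => x ^+ t == 1) rs)) => [hall|]; last first.
    case/allPn => x /mapP [a ha ->] hx; exists a => //.
    by move: ha; rewrite mem_index_iota.
  exfalso.
  have hnz : ('X^t - 1 : {poly F}) != 0 by rewrite -size_poly_eq0 size_Xn_sub_1.
  have hroots : all (root ('X^t - 1)) rs.
    apply/allP => x hx; rewrite -/(t.-unity_root x) unity_rootE.
    exact: (allP hall).
  have huniq : uniq rs.
    rewrite map_inj_in_uniq ?iota_uniq // => x y.
    rewrite !mem_index_iota => /andP[_ hx] /andP[_ hy]; exact: natF_inj.
  have := max_poly_roots hnz hroots huniq.
  rewrite size_Xn_sub_1 // size_map size_iota; lia.
pose f x := (a * x %% p)%N.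
have hperm : perm_eq [seq f x | x <- index_iota 0 p] (index_iota 0 p).
  have hu : uniq [seq f x | x <- index_iota 0 p].
    rewrite map_inj_in_uniq ?iota_uniq // => x y.
    rewrite !mem_index_iota => /andP[_ hx] /andP[_ hy] hf.
    apply: natF_inj => //.
    have : (f x)%:R = (f y)%:R :> F by rewrite hf.
    rewrite /f !Fp_nat_mod // !natrM => /mulfI; apply.
    by apply: natF_neq0; rewrite ha1 ha2.
  apply: uniq_perm => //; first exact: iota_uniq.
  have hsub : {subset [seq f x | x <- index_iota 0 p] <= index_iota 0 p}.
    move=> y /mapP [x _ ->]; rewrite mem_index_iota /f ltn_pmod //.
    exact: prime_gt0.
  have [_ heq] := uniq_min_size hu hsub (eq_leq (esym (size_map _ _))).
  exact: heq.
have hS : \sum_(0 <= x < p) ((x%:R : F) ^+ t) = (a%:R) ^+ t * \sum_(0 <= x < p) ((x%:R : F) ^+ t).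
  rewrite [LHS](perm_big [seq f x | x <- index_iota 0 p]); last by rewrite perm_sym.
  rewrite big_map mulr_sumr.
  apply: eq_bigr => x _; by rewrite /f Fp_nat_mod // natrM exprMn.
move/eqP: hS; rewrite -subr_eq0 -{1}[\sum_(0 <= x < p) _]mul1r -mulrBl mulf_eq0.
by rewrite subr_eq0 eq_sym (negbTE hat) => /eqP.
Qed.

Lemma Zhalf t : ~~ odd t -> (0 < t)%N -> (t < p.-1)%N ->
  \sum_(1 <= j < (p./2).+1) ((j%:R : F) ^+ t) = 0.
Proof.
move=> te t0 tp; have hp := podd.
have := @powsum0 t t0 tp.
rewrite (@big_cat_nat _ _ _ 1) //; last lia.
rewrite [\sum_(1 <= i < p) _](@big_cat_nat _ _ _ (p./2).+1) //=; last lia.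
rewrite big_nat1 expr0n (gtn_eqF t0) add0r.
have -> : \sum_((p./2).+1 <= i < p) (i%:R : F) ^+ t = \sum_(1 <= j < (p./2).+1) (j%:R : F) ^+ t.
  rewrite -(@reindex_nat _ 1 (p./2).+1 _ _ xpredT xpredT (fun j => p - j)%N (fun u => p - u)%N (fun x => (x%:R : F) ^+ t)).
  - rewrite big_nat_cond [RHS]big_nat_cond; apply: eq_bigr => j /andP[/andP[hj1 hj2] _]; rewrite (@natF_opp (p - j) j 1); last lia.
    exact: exprN_even.
  - move=> s hs _; split; [lia|split => //; lia].
  - move=> u hu _; split; [lia|split => //; lia].
move=> h; apply: double_eq0; by rewrite mulr_natl mulr2n.
Qed.

Lemma hF_W t : ~~ odd t -> (0 < t)%N -> (t < p.-1)%N ->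
  hF t = 4%:R * (-1) ^+ (p./2) * (4%:R) ^+ t *
     \sum_(0 <= u < p.+1 | (0 < u)%N && (4 * u < p)%N) ((u%:R : F) ^+ t).
Proof.
move=> te t0 tp; have hp := podd.
set q := p./2.
have hq : (2 * q + 1)%N = p by rewrite /q; lia.
set X := \sum_(1 <= j < q.+1) (-1) ^+ j * (((2 * j)%N%:R : F) ^+ t).
pose G' (m : nat) : F := (-1) ^+ m * ((2 * m + 1)%N%:R) ^+ t.
have c1 : \sum_(0 <= m < q) G' m = (-1) ^+ q * X.
  rewrite -(@reindex_nat _ 1 q.+1 _ _ xpredT xpredT (fun j => q - j)%N (fun u => q - u)%N G'); last first.
  - move=> u hu _; split; [lia|split => //; lia].
  - move=> s hs _; split; [lia|split => //; lia].
  rewrite /X mulr_sumr big_nat_cond [RHS]big_nat_cond.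
  apply: eq_bigr => j /andP[hj _]; rewrite /G' mulrA -exprD.
  rewrite (@sign_eq _ (q - j) (q + j)); last lia.
  rewrite (@natF_opp (2 * (q - j) + 1) (2 * j) 1); last lia.
  by rewrite (@exprN_even _ _ _ te).
have c2 : \sum_(q.+1 <= m < p) G' m = (-1) ^+ q * X.
  rewrite -(@reindex_nat _ 1 q.+1 _ _ xpredT xpredT (fun j => j + q)%N (fun u => u - q)%N G'); last first.
  - move=> u hu _; split; [lia|split => //; lia].
  - move=> s hs _; split; [lia|split => //; lia].
  rewrite /X mulr_sumr.
  apply: eq_bigr => j _; rewrite /G' mulrA -exprD addnC.
  by rewrite (@natF_shift (2 * (q + j) + 1) (2 * j) 1) //; lia.
have hFX : hF t = 2%:R * (-1) ^+ q * X.
  rewrite /hF (@big_cat_nat _ _ _ q) //=; last lia.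
  rewrite [\sum_(q <= i < p) _](@big_cat_nat _ _ _ q.+1) //=; last lia.
  rewrite -/(G' _) c1 big_nat1 c2 /G' hq p0 expr0n (gtn_eqF t0) mulr0.
  by rewrite add0r -mulrA mulr_natl mulr2n.
have hXYZ : X = 2%:R * \sum_(1 <= j < q.+1 | ~~ odd j) (((2 * j)%N%:R : F) ^+ t)
                - \sum_(1 <= j < q.+1) (((2 * j)%N%:R : F) ^+ t).
  rewrite /X (bigID odd) /= [X in _ - X](bigID odd) /=.
  have -> : \sum_(1 <= i < q.+1 | true && odd i) (-1) ^+ i * (((2 * i)%N%:R : F) ^+ t)
      = - \sum_(1 <= i < q.+1 | true && odd i) (((2 * i)%N%:R : F) ^+ t).
    rewrite -sumrN; apply: eq_bigr => i /andP[_ hi]; by rewrite -signr_odd hi expr1 mulN1r.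
  have -> : \sum_(1 <= i < q.+1 | true && ~~ odd i) (-1) ^+ i * (((2 * i)%N%:R : F) ^+ t)
      = \sum_(1 <= i < q.+1 | true && ~~ odd i) (((2 * i)%N%:R : F) ^+ t).
    apply: eq_bigr => i /andP[_ hi]; by rewrite -signr_odd (negbTE hi) expr0 mul1r.
  rewrite mulr_natl mulr2n. set A := \sum_(_ <= _ < _ | _) _. set B := \sum_(_ <= _ < _ | _) _.
  ring.
have hZ : \sum_(1 <= j < q.+1) (((2 * j)%N%:R : F) ^+ t) = 0.
  under eq_bigr do rewrite natrM exprMn.
  by rewrite -mulr_sumr Zhalf // mulr0.
have hY : \sum_(1 <= j < q.+1 | ~~ odd j) (((2 * j)%N%:R : F) ^+ t)
    = (4%:R) ^+ t * \sum_(0 <= u < p.+1 | (0 < u)%N && (4 * u < p)%N) ((u%:R : F) ^+ t).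
  rewrite -(@reindex_nat _ 0 p.+1 1 q.+1 (fun u => (0 < u)%N && (4 * u < p)%N) (fun j => ~~ odd j)
      (fun u => 2 * u)%N (fun j => j./2) (fun j => ((2 * j)%N%:R : F) ^+ t)); last first.
  - move=> u hu hu'; split; [lia|split; lia].
  - move=> s hs hs'; split; [lia|split; lia].
  rewrite mulr_sumr; apply: eq_bigr => u _; by rewrite mulnA natrM exprMn.
rewrite hFX hXYZ hZ subr0 hY.
have h4 : (4%:R : F) = 2%:R * 2%:R by rewrite -natrM.
rewrite h4; ring.
Qed.
End Fp.


Section Pieces.
Variable p : nat.
Hypothesis pP : prime p.
Hypothesis p5 : (5 <= p)%N.
Variable t : nat.
Hypothesis te : ~~ odd t.
Local Notation F := 'F_p.

Definition SU (P : pred nat) : F := \sum_(0 <= u < p.+1 | P u) ((u%:R : F) ^+ t).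

Lemma pieceM (c m : nat) (P Q : pred nat) :
  (forall s, (s < p.+1)%N -> P s -> (c * s <= m * p)%N /\ (m * p - c * s < p.+1)%N /\
       Q (m * p - c * s)%N /\ ((m * p - (m * p - c * s)) %/ c = s)%N) ->
  (forall u, (u < p.+1)%N -> Q u -> ((m * p - u) %/ c < p.+1)%N /\ P ((m * p - u) %/ c)%N /\
       (m * p - c * ((m * p - u) %/ c) = u)%N) ->
  (c%:R : F) ^+ t * \sum_(0 <= s < p.+1 | P s) ((s%:R : F) ^+ t) = SU Q.
Proof.
move=> H1 H2; rewrite mulr_sumr.
rewrite big_nat_cond (eq_bigr (fun s => ((m * p - c * s)%N%:R : F) ^+ t)); last first.
  move=> s /andP[/andP[_ hs] Ps]; have [hle _] := H1 s hs Ps.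
  rewrite -exprMn -natrM (@natF_opp p pP (m * p - c * s) (c * s) m); last by rewrite subnK.
  by rewrite (@exprN_even _ _ _ te).
rewrite -big_nat_cond /SU.
apply: (@reindex_nat _ 0 p.+1 0 p.+1 P Q (fun s => m * p - c * s)%N (fun u => (m * p - u) %/ c)%N (fun x => (x%:R : F) ^+ t)).
- move=> s /andP[_ hs] Ps; have [_ [h1 [h2 h3]]] := H1 s hs Ps; split => //.
- move=> u /andP[_ hu] Qu; have [h1 [h2 h3]] := H2 u hu Qu; split => //.
Qed.

Lemma pieceP (c m : nat) (P Q : pred nat) :
  (forall s, (s < p.+1)%N -> P s -> (m * p <= c * s)%N /\ (c * s - m * p < p.+1)%N /\
       Q (c * s - m * p)%N /\ ((c * s - m * p + m * p) %/ c = s)%N) ->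
  (forall u, (u < p.+1)%N -> Q u -> ((u + m * p) %/ c < p.+1)%N /\ P ((u + m * p) %/ c)%N /\
       (c * ((u + m * p) %/ c) - m * p = u)%N) ->
  (c%:R : F) ^+ t * \sum_(0 <= s < p.+1 | P s) ((s%:R : F) ^+ t) = SU Q.
Proof.
move=> H1 H2; rewrite mulr_sumr.
rewrite big_nat_cond (eq_bigr (fun s => ((c * s - m * p)%N%:R : F) ^+ t)); last first.
  move=> s /andP[/andP[_ hs] Ps]; have [hle _] := H1 s hs Ps.
  rewrite -exprMn -natrM (@natF_shift p pP (c * s) (c * s - m * p) m) //.
  by rewrite subnK.
rewrite -big_nat_cond /SU.
apply: (@reindex_nat _ 0 p.+1 0 p.+1 P Q (fun s => c * s - m * p)%N (fun u => (u + m * p) %/ c)%N (fun x => (x%:R : F) ^+ t)).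
- move=> s /andP[_ hs] Ps; have [_ [h1 [h2 h3]]] := H1 s hs Ps; split => //.
- move=> u /andP[_ hu] Qu; have [h1 [h2 h3]] := H2 u hu Qu; split => //.
Qed.

Lemma merge (A B C : pred nat) :
  (forall u, (u < p.+1)%N -> (C u <-> A u \/ B u)) ->
  (forall u, (u < p.+1)%N -> A u -> B u -> False) ->
  SU C = SU A + SU B.
Proof.
move=> hC hD; rewrite /SU big_mkcond [X in X + _]big_mkcond [X in _ + X]big_mkcond -big_split /=.
rewrite big_nat_cond [RHS]big_nat_cond; apply: eq_bigr => u /andP[/andP[_ hu] _].
have hC' : C u = A u || B u by apply/idP/orP => h; [exact: (hC u hu).1 h | exact: (hC u hu).2 h].
rewrite hC'; case hA: (A u); case hB: (B u) => /=; rewrite ?addr0 ?add0r //.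
by case: (hD u hu hA hB).
Qed.
End Pieces.

Definition P1 (p u : nat) : bool := ((u %% 32 == 0) && (0 < u) && (4 * u < p))%N.
Definition P2 (p u : nat) : bool := ((u %% 6 == p %% 6) && (p < 8 * u) && (4 * u < p))%N.
Definition P3 (p u : nat) : bool := (((u + p) %% 6 == 0) && (p < 8 * u) && (4 * u < p))%N.
Definition P4 (p u : nat) : bool := ((u %% 2 == 1) && (p < 12 * u) && (8 * u < p))%N.
Definition P5 (p u : nat) : bool := ((u %% 4 == 2) && (p < 6 * u) && (4 * u < p))%N.
Definition P6 (p u : nat) : bool := ((u %% 2 == 1) && (p < 16 * u) && (12 * u < p))%N.
Definition P7 (p u : nat) : bool := ((u %% 4 == 2) && (p < 8 * u) && (6 * u < p))%N.
Definition P8 (p u : nat) : bool := ((u %% 6 == 3) && (3 * p < 16 * u) && (4 * u < p))%N.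
Definition P9 (p u : nat) : bool := ((u %% 2 == 1) && (p < 24 * u) && (16 * u < p))%N.
Definition P10 (p u : nat) : bool := ((u %% 4 == 2) && (p < 12 * u) && (8 * u < p))%N.
Definition P11 (p u : nat) : bool := ((u %% 6 == 3) && (p < 8 * u) && (16 * u < 3 * p))%N.
Definition P12 (p u : nat) : bool := ((u %% 8 == 4) && (p < 6 * u) && (4 * u < p))%N.
Definition P13 (p u : nat) : bool := ((u %% 2 == 1) && (p < 32 * u) && (24 * u < p))%N.
Definition P14 (p u : nat) : bool := ((u %% 4 == 2) && (p < 16 * u) && (12 * u < p))%N.
Definition P15 (p u : nat) : bool := ((u %% 8 == 4) && (p < 8 * u) && (6 * u < p))%N.
Definition P16 (p u : nat) : bool := ((u %% 2 == 1) && (p < 64 * u) && (32 * u < p))%N.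
Definition P17 (p u : nat) : bool := ((u %% 4 == 2) && (p < 32 * u) && (16 * u < p))%N.
Definition P18 (p u : nat) : bool := ((u %% 8 == 4) && (p < 16 * u) && (8 * u < p))%N.
Definition P19 (p u : nat) : bool := ((u %% 16 == 8) && (p < 8 * u) && (4 * u < p))%N.
Definition P20 (p u : nat) : bool := ((u %% 2 == 1) && (0 < u) && (64 * u < p))%N.
Definition P21 (p u : nat) : bool := ((u %% 4 == 2) && (0 < u) && (32 * u < p))%N.
Definition P22 (p u : nat) : bool := ((u %% 8 == 4) && (0 < u) && (16 * u < p))%N.
Definition P23 (p u : nat) : bool := ((u %% 16 == 8) && (0 < u) && (8 * u < p))%N.
Definition P24 (p u : nat) : bool := ((u %% 32 == 16) && (0 < u) && (4 * u < p))%N.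
Definition C0 (p u : nat) : bool := ((0 < u) && (4 * u < p))%N.
Definition Od (p u : nat) : bool := ((u %% 2 == 1) && (0 < u) && (4 * u < p))%N.
Definition Ev (p u : nat) : bool := ((u %% 2 == 0) && (0 < u) && (4 * u < p))%N.
Definition OL (p u : nat) : bool := ((u %% 2 == 1) && (0 < u) && (8 * u < p))%N.
Definition OH (p u : nat) : bool := ((u %% 2 == 1) && (p < 8 * u) && (4 * u < p))%N.
Definition OL1 (p u : nat) : bool := ((u %% 2 == 1) && (p < 64 * u) && (8 * u < p))%N.
Definition OL2 (p u : nat) : bool := ((u %% 2 == 1) && (p < 32 * u) && (8 * u < p))%N.
Definition OL3 (p u : nat) : bool := ((u %% 2 == 1) && (p < 24 * u) && (8 * u < p))%N.
Definition OL4 (p u : nat) : bool := ((u %% 2 == 1) && (p < 16 * u) && (8 * u < p))%N.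
Definition OH1 (p u : nat) : bool := ((u %% 2 == 1) && (u %% 6 != p %% 6) && (p < 8 * u) && (4 * u < p))%N.
Definition OH2 (p u : nat) : bool := ((u %% 6 == 3) && (p < 8 * u) && (4 * u < p))%N.
Definition E2 (p u : nat) : bool := ((u %% 4 == 2) && (0 < u) && (4 * u < p))%N.
Definition E0 (p u : nat) : bool := ((u %% 4 == 0) && (0 < u) && (4 * u < p))%N.
Definition E2a (p u : nat) : bool := ((u %% 4 == 2) && (p < 32 * u) && (4 * u < p))%N.
Definition E2b (p u : nat) : bool := ((u %% 4 == 2) && (p < 16 * u) && (4 * u < p))%N.
Definition E2c (p u : nat) : bool := ((u %% 4 == 2) && (p < 12 * u) && (4 * u < p))%N.
Definition E2d (p u : nat) : bool := ((u %% 4 == 2) && (p < 8 * u) && (4 * u < p))%N.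
Definition F4 (p u : nat) : bool := ((u %% 8 == 4) && (0 < u) && (4 * u < p))%N.
Definition F0 (p u : nat) : bool := ((u %% 8 == 0) && (0 < u) && (4 * u < p))%N.
Definition F4a (p u : nat) : bool := ((u %% 8 == 4) && (p < 16 * u) && (4 * u < p))%N.
Definition F4b (p u : nat) : bool := ((u %% 8 == 4) && (p < 8 * u) && (4 * u < p))%N.
Definition G8 (p u : nat) : bool := ((u %% 16 == 8) && (0 < u) && (4 * u < p))%N.
Definition G0 (p u : nat) : bool := ((u %% 16 == 0) && (0 < u) && (4 * u < p))%N.

Lemma partition (p t : nat) : prime p -> (5 <= p)%N ->
  SU p t (C0 p) = SU p t (P1 p) + SU p t (P2 p) + SU p t (P3 p) + SU p t (P4 p) + SU p t (P5 p) + SU p t (P6 p) + SU p t (P7 p) + SU p t (P8 p) + SU p t (P9 p) + SU p t (P10 p) + SU p t (P11 p) + SU p t (P12 p) + SU p t (P13 p) + SU p t (P14 p) + SU p t (P15 p) + SU p t (P16 p) + SU p t (P17 p) + SU p t (P18 p) + SU p t (P19 p) + SU p t (P20 p) + SU p t (P21 p) + SU p t (P22 p) + SU p t (P23 p) + SU p t (P24 p).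
Proof.
move=> pP p5.
have hp : odd p by case: (even_prime pP) => // h; move: p5; rewrite h.
have h3 : (p %% 3 != 0)%N.
  apply/negP => /eqP h; have : (3 %| p)%N by rewrite /dvdn h.
  rewrite (dvdn_prime2 (isT : prime 3) pP) => /eqP h'; by move: p5; rewrite -h'.
rewrite (@merge p t (Od p) (Ev p) (C0 p)); [| by move=> u hu; rewrite /Od /Ev /C0; split; lia | by move=> u hu; rewrite /Od /Ev => ha hb; lia].
rewrite (@merge p t (OL p) (OH p) (Od p)); [| by move=> u hu; rewrite /OL /OH /Od; split; lia | by move=> u hu; rewrite /OL /OH => ha hb; lia].
rewrite (@merge p t (P20 p) (OL1 p) (OL p)); [| by move=> u hu; rewrite /P20 /OL1 /OL; split; lia | by move=> u hu; rewrite /P20 /OL1 => ha hb; lia].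
rewrite (@merge p t (P16 p) (OL2 p) (OL1 p)); [| by move=> u hu; rewrite /P16 /OL2 /OL1; split; lia | by move=> u hu; rewrite /P16 /OL2 => ha hb; lia].
rewrite (@merge p t (P13 p) (OL3 p) (OL2 p)); [| by move=> u hu; rewrite /P13 /OL3 /OL2; split; lia | by move=> u hu; rewrite /P13 /OL3 => ha hb; lia].
rewrite (@merge p t (P9 p) (OL4 p) (OL3 p)); [| by move=> u hu; rewrite /P9 /OL4 /OL3; split; lia | by move=> u hu; rewrite /P9 /OL4 => ha hb; lia].
rewrite (@merge p t (P6 p) (P4 p) (OL4 p)); [| by move=> u hu; rewrite /P6 /P4 /OL4; split; lia | by move=> u hu; rewrite /P6 /P4 => ha hb; lia].
rewrite (@merge p t (P2 p) (OH1 p) (OH p)); [| by move=> u hu; rewrite /P2 /OH1 /OH; split; lia | by move=> u hu; rewrite /P2 /OH1 => ha hb; lia].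
rewrite (@merge p t (P3 p) (OH2 p) (OH1 p)); [| by move=> u hu; rewrite /P3 /OH2 /OH1; split; lia | by move=> u hu; rewrite /P3 /OH2 => ha hb; lia].
rewrite (@merge p t (P11 p) (P8 p) (OH2 p)); [| by move=> u hu; rewrite /P11 /P8 /OH2; split; lia | by move=> u hu; rewrite /P11 /P8 => ha hb; lia].
rewrite (@merge p t (E2 p) (E0 p) (Ev p)); [| by move=> u hu; rewrite /E2 /E0 /Ev; split; lia | by move=> u hu; rewrite /E2 /E0 => ha hb; lia].
rewrite (@merge p t (P21 p) (E2a p) (E2 p)); [| by move=> u hu; rewrite /P21 /E2a /E2; split; lia | by move=> u hu; rewrite /P21 /E2a => ha hb; lia].
rewrite (@merge p t (P17 p) (E2b p) (E2a p)); [| by move=> u hu; rewrite /P17 /E2b /E2a; split; lia | by move=> u hu; rewrite /P17 /E2b => ha hb; lia].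
rewrite (@merge p t (P14 p) (E2c p) (E2b p)); [| by move=> u hu; rewrite /P14 /E2c /E2b; split; lia | by move=> u hu; rewrite /P14 /E2c => ha hb; lia].
rewrite (@merge p t (P10 p) (E2d p) (E2c p)); [| by move=> u hu; rewrite /P10 /E2d /E2c; split; lia | by move=> u hu; rewrite /P10 /E2d => ha hb; lia].
rewrite (@merge p t (P7 p) (P5 p) (E2d p)); [| by move=> u hu; rewrite /P7 /P5 /E2d; split; lia | by move=> u hu; rewrite /P7 /P5 => ha hb; lia].
rewrite (@merge p t (F4 p) (F0 p) (E0 p)); [| by move=> u hu; rewrite /F4 /F0 /E0; split; lia | by move=> u hu; rewrite /F4 /F0 => ha hb; lia].
rewrite (@merge p t (P22 p) (F4a p) (F4 p)); [| by move=> u hu; rewrite /P22 /F4a /F4; split; lia | by move=> u hu; rewrite /P22 /F4a => ha hb; lia].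
rewrite (@merge p t (P18 p) (F4b p) (F4a p)); [| by move=> u hu; rewrite /P18 /F4b /F4a; split; lia | by move=> u hu; rewrite /P18 /F4b => ha hb; lia].
rewrite (@merge p t (P15 p) (P12 p) (F4b p)); [| by move=> u hu; rewrite /P15 /P12 /F4b; split; lia | by move=> u hu; rewrite /P15 /P12 => ha hb; lia].
rewrite (@merge p t (G8 p) (G0 p) (F0 p)); [| by move=> u hu; rewrite /G8 /G0 /F0; split; lia | by move=> u hu; rewrite /G8 /G0 => ha hb; lia].
rewrite (@merge p t (P23 p) (P19 p) (G8 p)); [| by move=> u hu; rewrite /P23 /P19 /G8; split; lia | by move=> u hu; rewrite /P23 /P19 => ha hb; lia].
rewrite (@merge p t (P24 p) (P1 p) (G0 p)); [| by move=> u hu; rewrite /P24 /P1 /G0; split; lia | by move=> u hu; rewrite /P24 /P1 => ha hb; lia].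
rewrite !addrA.
ring.
Qed.


Lemma ltQ_l (a b p s : nat) : (0 < b)%N ->
  ((a%:R / b%:R : rat) * p%:R < s%:R) = (a * p < b * s)%N.
Proof.
move=> b0; rewrite mulrAC ltr_pdivrMr ?ltr0n // -!natrM ltr_nat mulnC.
by rewrite [(s * b)%N]mulnC.
Qed.

Lemma ltQ_r (c d p s : nat) : (0 < d)%N ->
  (s%:R < (c%:R / d%:R : rat) * p%:R) = (d * s < c * p)%N.
Proof.
move=> d0; by rewrite mulrAC ltr_pdivlMr ?ltr0n // -!natrM ltr_nat [(s * d)%N]mulnC.
Qed.

Lemma Ssum_F (p t : nat) (a b c d : nat) (x y : rat) : x = a%:R / b%:R -> y = c%:R / d%:R ->
  (0 < b)%N -> (0 < d)%N ->
  ((Ssum p t x y)%:~R : 'F_p) =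
  \sum_(0 <= s < p.+1 | (a * p < b * s)%N && (d * s < c * p)%N) ((s%:R : 'F_p) ^+ t).
Proof.
move=> -> -> b0 d0; rewrite /Ssum rmorph_sum /=.
apply: eq_big => s; first by rewrite ltQ_l // ltQ_r.
by move=> _; rewrite rmorphXn /= intr_natF.
Qed.

Lemma test1 : (0 : rat) = 0%:R / 1%:R. Proof. by rewrite mul0r. Qed.
Lemma test2 : (1 / 128 : rat) = 1%:R / 128%:R. Proof. by []. Qed.
Lemma test3 : (7 / 48 : rat) = 7%:R / 48%:R. Proof. by []. Qed.

Lemma final_alg (R : comRingType) (a b c x y z Y Y' : R) :
  a * b * c = 1 -> x * y * z = 1 -> Y = Y' -> a * x * (b * (y * c * z * Y)) - Y' == 0.
Proof.
move=> h1 h2 h3; have -> : a * x * (b * (y * c * z * Y)) = (a * b * c) * (x * y * z) * Y by ring.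
by rewrite h1 h2 !mul1r h3 subrr.
Qed.

Theorem mainTheorem7 (p k : nat) :
  prime p -> (5 <= p)%N -> (1 <= k)%N -> (k <= (p - 3)./2)%N ->
  let t := (p - 1 - 2 * k)%N in
  let S := Ssum p t in
  ((p%:Z) %| ((-1) ^+ k * 4 ^+ (2 * k - 1) * euler t
     - ( 32 ^+ t * S 0%R (1 / 128)%R
       + 6 ^+ t * S (1 / 8)%R (7 / 48)%R
       + 6 ^+ t * S (3 / 16)%R (5 / 24)%R
       + (2 ^+ t + 4 ^+ t) * S (7 / 16)%R (11 / 24)%R
       + (2 ^+ t + 4 ^+ t + 6 ^+ t) * S (11 / 24)%R (15 / 32)%R
       + (2 ^+ t + 4 ^+ t + 6 ^+ t + 8 ^+ t) * S (15 / 32)%R (23 / 48)%R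
       + (2 ^+ t + 4 ^+ t + 8 ^+ t) * S (23 / 48)%R (31 / 64)%R
       + (2 ^+ t + 4 ^+ t + 8 ^+ t + 16 ^+ t) * S (31 / 64)%R (63 / 128)%R
       + (2 ^+ t + 4 ^+ t + 8 ^+ t + 16 ^+ t + 32 ^+ t) * S (63 / 128)%R (1 / 2)%R)))%Z.
Proof.
move=> pP p5 k1 kp; cbv zeta; set t := (p - 1 - 2 * k)%N.
have hp : odd p by case: (even_prime pP) => // h; move: p5; rewrite h.
have te : ~~ odd t by rewrite /t; lia.
have t0 : (0 < t)%N by rewrite /t; lia.
have tp : (t < p.-1)%N by rewrite /t; lia.
rewrite (dvdz_pcharf (pchar_Fp pP)).
Time rewrite rmorphB !rmorphD !rmorphM !rmorphD !rmorphXn.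
Time rewrite !rmorph_nat.
Time rewrite rmorphN1 /=.
rewrite (@Ssum_F p t 0 1 1 128) ?mul0r //.
rewrite (@Ssum_F p t 1 8 7 48) //.
rewrite (@Ssum_F p t 3 16 5 24) //.
rewrite (@Ssum_F p t 7 16 11 24) //.
rewrite (@Ssum_F p t 11 24 15 32) //.
rewrite (@Ssum_F p t 15 32 23 48) //.
rewrite (@Ssum_F p t 23 48 31 64) //.
rewrite (@Ssum_F p t 31 64 63 128) //.
rewrite (@Ssum_F p t 63 128 1 2) //.
rewrite !mulrDl.
rewrite (@pieceM p pP t te 2 1 _ (P4 p)); [| by move=> s hs; rewrite /P4 /=; lia | by move=> u hu; rewrite /P4 /=; lia].
rewrite (@pieceM p pP t te 2 1 _ (P6 p)); [| by move=> s hs; rewrite /P6 /=; lia | by move=> u hu; rewrite /P6 /=; lia].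
rewrite (@pieceM p pP t te 2 1 _ (P9 p)); [| by move=> s hs; rewrite /P9 /=; lia | by move=> u hu; rewrite /P9 /=; lia].
rewrite (@pieceM p pP t te 2 1 _ (P13 p)); [| by move=> s hs; rewrite /P13 /=; lia | by move=> u hu; rewrite /P13 /=; lia].
rewrite (@pieceM p pP t te 2 1 _ (P16 p)); [| by move=> s hs; rewrite /P16 /=; lia | by move=> u hu; rewrite /P16 /=; lia].
rewrite (@pieceM p pP t te 2 1 _ (P20 p)); [| by move=> s hs; rewrite /P20 /=; lia | by move=> u hu; rewrite /P20 /=; lia].
rewrite (@pieceM p pP t te 4 2 _ (P5 p)); [| by move=> s hs; rewrite /P5 /=; lia | by move=> u hu; rewrite /P5 /=; lia].
rewrite (@pieceM p pP t te 4 2 _ (P7 p)); [| by move=> s hs; rewrite /P7 /=; lia | by move=> u hu; rewrite /P7 /=; lia].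
rewrite (@pieceM p pP t te 4 2 _ (P10 p)); [| by move=> s hs; rewrite /P10 /=; lia | by move=> u hu; rewrite /P10 /=; lia].
rewrite (@pieceM p pP t te 4 2 _ (P14 p)); [| by move=> s hs; rewrite /P14 /=; lia | by move=> u hu; rewrite /P14 /=; lia].
rewrite (@pieceM p pP t te 4 2 _ (P17 p)); [| by move=> s hs; rewrite /P17 /=; lia | by move=> u hu; rewrite /P17 /=; lia].
rewrite (@pieceM p pP t te 4 2 _ (P21 p)); [| by move=> s hs; rewrite /P21 /=; lia | by move=> u hu; rewrite /P21 /=; lia].
rewrite (@pieceM p pP t te 6 1 _ (P2 p)); [| by move=> s hs; rewrite /P2 /=; lia | by move=> u hu; rewrite /P2 /=; lia].
rewrite (@pieceP p pP t 6 1 _ (P3 p)); [| by move=> s hs; rewrite /P3 /=; lia | by move=> u hu; rewrite /P3 /=; lia].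
rewrite (@pieceM p pP t te 6 3 _ (P8 p)); [| by move=> s hs; rewrite /P8 /=; lia | by move=> u hu; rewrite /P8 /=; lia].
rewrite (@pieceM p pP t te 6 3 _ (P11 p)); [| by move=> s hs; rewrite /P11 /=; lia | by move=> u hu; rewrite /P11 /=; lia].
rewrite (@pieceM p pP t te 8 4 _ (P12 p)); [| by move=> s hs; rewrite /P12 /=; lia | by move=> u hu; rewrite /P12 /=; lia].
rewrite (@pieceM p pP t te 8 4 _ (P15 p)); [| by move=> s hs; rewrite /P15 /=; lia | by move=> u hu; rewrite /P15 /=; lia].
rewrite (@pieceM p pP t te 8 4 _ (P18 p)); [| by move=> s hs; rewrite /P18 /=; lia | by move=> u hu; rewrite /P18 /=; lia].
rewrite (@pieceM p pP t te 8 4 _ (P22 p)); [| by move=> s hs; rewrite /P22 /=; lia | by move=> u hu; rewrite /P22 /=; lia].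
rewrite (@pieceM p pP t te 16 8 _ (P19 p)); [| by move=> s hs; rewrite /P19 /=; lia | by move=> u hu; rewrite /P19 /=; lia].
rewrite (@pieceM p pP t te 16 8 _ (P23 p)); [| by move=> s hs; rewrite /P23 /=; lia | by move=> u hu; rewrite /P23 /=; lia].
rewrite (@pieceP p pP t 32 0 _ (P1 p)); [| by move=> s hs; rewrite /P1 /=; lia | by move=> u hu; rewrite /P1 /=; lia].
rewrite (@pieceM p pP t te 32 16 _ (P24 p)); [| by move=> s hs; rewrite /P24 /=; lia | by move=> u hu; rewrite /P24 /=; lia].
have hE := @E_hF p pP p5 t te; rewrite /EF in hE; rewrite hE (@hF_W p pP p5 t te t0 tp).
change (\sum_(0 <= u < p.+1 | (0 < u)%N && (4 * u < p)%N) ((u%:R : 'F_p) ^+ t)) with (SU p t (C0 p)).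
rewrite (@partition p t pP p5).
apply: final_alg; last by ring.
  by rewrite -!exprD (@sign_eq _ _ 0) ?expr0 //; rewrite /t; lia.
have h4 : (4%:R : 'F_p) != 0 by apply: (@natF_neq0 p pP); lia.
rewrite -exprSr -exprD.
have -> : ((2 * k - 1).+1 + t)%N = p.-1 by rewrite /t; lia.
have e1 : (4%:R : 'F_p) ^+ p = 4%:R * 4%:R ^+ p.-1 by rewrite -exprS prednK // prime_gt0.
have := expf_card (4%:R : 'F_p); rewrite card_Fp // e1.
rewrite -[X in _ = X -> _]mulr1 => /(mulfI h4).
by [].
Qed.
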